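(* Let $A\ne0$ be a real symmetric weighted adjacency matrix of a finite simple graph on $n$ vertices, and let $y\in\mathbb R$ satisfy $W_A(y)=\min\{W_A(x):\lambda_{\min}(A)^{-1}\le x\le\lambda_{\max}(A)^{-1}\}$. Then there exists $\boldsymbol u\in\mathbb R^n$ with $$|\boldsymbol u|^2=W_A(y),\qquad\langle\boldsymbol u,A\boldsymbol u\rangle=0,\qquad|\boldsymbol u|^2=\langle\boldsymbol 1,\boldsymbol u\rangle.$$
   Context: A weighted adjacency matrix is a real symmetric $A$ with $A_{ii}=0$ and $A_{ij}=0$ for non-adjacent $i\ne j$. $\boldsymbol 1$ is the all-ones vector. $W_A(x)=\sum_{\lambda\in\sigma(A)}\frac{\langle\boldsymbol 1,P_\lambda\boldsymbol 1\rangle}{1-\lambda x}$ with $P_\lambda$ the orthogonal eigenprojections of $A$, terms with $\langle\boldsymbol 1,P_\lambda\boldsymbol 1\rangle=0$ omitted, and value $+\infty$ at a pole. *)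

(* Defs.v *)
From HB Require Import structures.
From mathcomp Require Import all_boot all_order all_algebra.
From mathcomp Require Import polyrcf.
From mathcomp Require Import reals constructive_ereal.
Set Implicit Arguments. Unset Strict Implicit. Unset Printing Implicit Defensive.
Import Order.TTheory GRing.Theory Num.Theory.
Local Open Scope ring_scope.

Section Defs.
Variables (R : realType) (n : nat).

Definition weighted_adjacency (e : rel 'I_n) (A : 'M[R]_n) : Prop :=
  A^T = A /\ (forall i, A i i = 0) /\ (forall i j, i != j -> ~~ e i j -> A i j = 0).

Definition simple_graph (e : rel 'I_n) : Prop :=
  symmetric e /\ irreflexive e.

(* orthogonal projection onto the eigenspace of A for l (0 if l is not an
   eigenvalue): V^T (V V^T)^-1 V for V a row basis of the eigenspace *)
Definition eigenproj (A : 'M[R]_n) (l : R) : 'M[R]_n :=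
  let V := row_base (eigenspace A l) in V^T *m invmx (V *m V^T) *m V.

Definition ones : 'cV[R]_n := const_mx 1.

Definition eigweight (A : 'M[R]_n) (l : R) : R :=
  (ones^T *m eigenproj A l *m ones) 0 0.

(* the (distinct, sorted) eigenvalues of A *)
Definition spectrum (A : 'M[R]_n) : seq R := rootsR (char_poly A).

Definition lambda_min (A : 'M[R]_n) : R := head 0 (spectrum A).
Definition lambda_max (A : 'M[R]_n) : R := last 0 (spectrum A).

Definition WA (A : 'M[R]_n) (x : R) : \bar R :=
  let S := [seq l <- spectrum A | eigweight A l != 0] in
  if has (fun l => 1 - l * x == 0) S then +oo%E
  else (\sum_(l <- S) eigweight A l / (1 - l * x))%:E.

Definition sqnorm (u : 'cV[R]_n) : R := \sum_i u i 0 ^+ 2.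
Definition dotp (u v : 'cV[R]_n) : R := (u^T *m v) 0 0.

End Defs.

(* Main.v *)
Require Import Defs.
From HB Require Import structures.
From mathcomp Require Import all_boot all_order all_algebra.
From mathcomp Require Import polyrcf.
From mathcomp Require Import reals constructive_ereal.
From mathcomp Require Import complex.
From mathcomp Require spectral.
From mathcomp Require Import ring lra.
Import Order.TTheory GRing.Theory Num.Theory.
Local Open Scope ring_scope.

Module Aux_S1.
Set Implicit Arguments. Unset Strict Implicit. Unset Printing Implicit Defensive.
Notation cRe := (@complex.Re _). Notation cIm := (@complex.Im _).

Section Cx.
Variable R : realType.

Lemma Re_sum (I : Type) (s : seq I) (F : I -> R[i]) :
  cRe (\sum_(i <- s) F i) = \sum_(i <- s) cRe (F i).
Proof. elim: s => [|a s IH]; first by rewrite !big_nil. rewrite !big_cons -IH. by move: (F a) (\sum_(i <- s) F i) => [? ?] [? ?]. Qed.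

Lemma Im_sum (I : Type) (s : seq I) (F : I -> R[i]) :
  cIm (\sum_(i <- s) F i) = \sum_(i <- s) cIm (F i).
Proof. elim: s => [|a s IH]; first by rewrite !big_nil. rewrite !big_cons -IH. by move: (F a) (\sum_(i <- s) F i) => [? ?] [? ?]. Qed.

Lemma ReMC (x : R[i]) (k : R) : cRe (x * real_complex R k) = cRe x * k.
Proof. by case: x => a b /=; rewrite mulr0 subr0. Qed.
Lemma ImMC (x : R[i]) (k : R) : cIm (x * real_complex R k) = cIm x * k.
Proof. by case: x => a b /=; rewrite mulr0 add0r. Qed.

Lemma ReM (x y : R[i]) : cRe (x * y) = cRe x * cRe y - cIm x * cIm y.
Proof. by case: x y => ?? [??]. Qed.
Lemma ImM (x y : R[i]) : cIm (x * y) = cRe x * cIm y + cIm x * cRe y.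
Proof. by case: x y => ?? [??]. Qed.

Lemma mapRe_mul p q s (u : 'M[R[i]]_(p,q)) (M : 'M[R]_(q,s)) :
  map_mx (@complex.Re R) (u *m map_mx (real_complex R) M) = map_mx (@complex.Re R) u *m M.
Proof.
apply/matrixP => i j; rewrite !mxE Re_sum; apply: eq_bigr => k _.
by rewrite !mxE ReMC.
Qed.

Lemma mapIm_mul p q s (u : 'M[R[i]]_(p,q)) (M : 'M[R]_(q,s)) :
  map_mx (@complex.Im R) (u *m map_mx (real_complex R) M) = map_mx (@complex.Im R) u *m M.
Proof.
apply/matrixP => i j; rewrite !mxE Im_sum; apply: eq_bigr => k _.
by rewrite !mxE ImMC.
Qed.


Lemma dot_ge0 n (u : 'rV[R]_n) : 0 <= (u *m u^T) 0 0.
Proof. by rewrite mxE; apply: sumr_ge0 => j _; rewrite mxE -expr2 sqr_ge0. Qed.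

Lemma dot0 n (u : 'rV[R]_n) : (u *m u^T) 0 0 = 0 -> u = 0.
Proof.
rewrite mxE => /psumr_eq0P H; apply/rowP => j; rewrite mxE.
have /H /(_ j isT) : forall k : 'I_n, true -> 0 <= u 0 k * u^T k 0.
  by move=> k _; rewrite mxE -expr2 sqr_ge0.
by rewrite mxE => /eqP; rewrite -expr2 sqrf_eq0 => /eqP.
Qed.

Lemma dotC n (u w : 'rV[R]_n) : (u *m w^T) 0 0 = (w *m u^T) 0 0.
Proof. rewrite -[w *m u^T]trmxK trmx_mul trmxK. by rewrite [RHS]mxE. Qed.

Lemma sym_eigvec n (A : 'M[R]_n) m (U : 'M[R]_(m,n)) :
  A^T = A -> U != 0 -> (U *m A <= U)%MS ->
  exists x : R, exists w : 'rV[R]_n, [/\ w != 0, (w <= U)%MS & w *m A = x *: w].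
Proof.
move=> sA U0 sUA.
have r0 : (0 < \rank U)%N by rewrite lt0n mxrank_eq0.
set V := row_base U.
have sVA : (V *m A <= V)%MS.
  rewrite eq_row_base; apply: submx_trans sUA; apply: submxMr; rewrite eq_row_base //.
set B := V *m A *m pinvmx V.
have hVA : B *m V = V *m A by rewrite mulmxKpV.
have [z /eigenvalueP [c hc c0]] := spectral.eigenvalue_closed (map_mx (real_complex R) B) r0.
set v := c *m map_mx (real_complex R) V.
have hv : v *m map_mx (real_complex R) A = z *: v.
  by rewrite /v -mulmxA -map_mxM -hVA map_mxM mulmxA hc -scalemxAl.
have v0 : v != 0.
  by rewrite /v mulmx_free_eq0 // /row_free mxrank_map; exact: row_base_free.
have hvdef : v = c *m map_mx (real_complex R) V by [].
clearbody v.
set a := map_mx cRe v; set b := map_mx cIm v.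
have ha : a *m A = cRe z *: a - cIm z *: b.
  rewrite /a -mapRe_mul hv; apply/matrixP => i j; rewrite !mxE.
  by rewrite ReM.
have hb : b *m A = cRe z *: b + cIm z *: a.
  rewrite /b -mapIm_mul hv; apply/matrixP => i j; rewrite !mxE.
  by rewrite ImM addrC.
have key : (a *m A *m b^T) 0 0 = (b *m A *m a^T) 0 0.
  have -> : b *m A *m a^T = (a *m A *m b^T)^T by rewrite !trmx_mul !trmxK sA mulmxA.
  by rewrite [RHS]mxE.
have E1 (M N : 'M[R]_1) (k l : R) : (k *: M - l *: N) 0 0 = k * M 0 0 - l * N 0 0.
  by rewrite !mxE.
have E2 (M N : 'M[R]_1) (k l : R) : (k *: M + l *: N) 0 0 = k * M 0 0 + l * N 0 0.
  by rewrite !mxE.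
move: key; rewrite ha hb mulmxBl mulmxDl -!scalemxAl E1 E2 [(b *m a^T) 0 0]dotC.
set p := (a *m b^T) 0 0; set q := (b *m b^T) 0 0; set r := (a *m a^T) 0 0.
move=> H.
have : cIm z * (r + q) == 0.
  apply/eqP; transitivity ((cRe z * p + cIm z * r) - (cRe z * p - cIm z * q)); first ring.
  by rewrite H subrr.
rewrite mulf_eq0 => /orP [/eqP y0|].
  exists (cRe z).
  have [a0|a0] := eqVneq a 0.
    exists b; split.
    - apply: contra v0 => /eqP b0; apply/eqP/matrixP => i j.
      move/matrixP: a0 => /(_ i j); move/matrixP: b0 => /(_ i j); rewrite !mxE.
      by case: (v i j) => ?? /= -> ->.
    - by rewrite /b hvdef mapIm_mul; apply: submx_trans (submxMl _ _) _; rewrite eq_row_base.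
    - by rewrite hb y0 scale0r addr0.
  exists a; split => //.
  - by rewrite /a hvdef mapRe_mul; apply: submx_trans (submxMl _ _) _; rewrite eq_row_base.
  - by rewrite ha y0 scale0r subr0.
rewrite paddr_eq0 ?dot_ge0 // => /andP [/eqP /dot0 a0 /eqP /dot0 b0].
case/eqP: v0; apply/matrixP => i j.
move/matrixP: a0 => /(_ i j); move/matrixP: b0 => /(_ i j); rewrite !mxE.
by case: (v i j) => ?? /= -> ->.
Qed.


Lemma MMT0 p q (M : 'M[R]_(p,q)) : M *m M^T = 0 -> M = 0.
Proof.
move=> H; apply/matrixP => i j; rewrite mxE.
have /matrixP /(_ i i) := H; rewrite !mxE => /psumr_eq0P H2.
have /H2 /(_ j isT) : forall k : 'I_q, true -> 0 <= M i k * M^T k i.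
  by move=> k _; rewrite mxE -expr2 sqr_ge0.
by rewrite mxE => /eqP; rewrite -expr2 sqrf_eq0 => /eqP.
Qed.

Section Proj.
Variables (n : nat) (A : 'M[R]_n).
Hypothesis sA : A^T = A.

Let V l := row_base (eigenspace A l).
Let G l := V l *m (V l)^T.

Lemma G_unit l : G l \in unitmx.
Proof.
rewrite -row_free_unit -kermx_eq0; apply/eqP.
set K := kermx (G l).
have KV : K *m V l = 0.
  apply: MMT0; rewrite trmx_mul mulmxA -(mulmxA K) -/(G l) mulmx_ker mul0mx //.
by apply/eqP; rewrite -(mulmx_free_eq0 _ (row_base_free _)) KV.
Qed.

Lemma G_sym l : (G l)^T = G l.
Proof. by rewrite /G trmx_mul trmxK. Qed.

Lemma eigenprojE l : eigenproj A l = (V l)^T *m invmx (G l) *m V l.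
Proof. by []. Qed.

Lemma VA l : V l *m A = l *: V l.
Proof. by apply/eigenspaceP; rewrite eq_row_base. Qed.

Lemma P_sym l : (eigenproj A l)^T = eigenproj A l.
Proof.
rewrite eigenprojE; have := G_unit l; have := G_sym l; rewrite /G; move: (V l) => W GS GU.
by rewrite !trmx_mul trmxK trmx_inv GS mulmxA.
Qed.

Lemma P_idem l : eigenproj A l *m eigenproj A l = eigenproj A l.
Proof.
rewrite eigenprojE; have := G_unit l; rewrite /G; move: (V l) => W GU.
by rewrite !mulmxA -(mulmxA _ W) mulmxKV.
Qed.

Lemma PA l : eigenproj A l *m A = l *: eigenproj A l.
Proof. by rewrite eigenprojE -[_ *m V l *m A]mulmxA VA -scalemxAr. Qed.

Lemma AP l : A *m eigenproj A l = l *: eigenproj A l.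
Proof. by rewrite -{1}sA -{1}(P_sym l) -trmx_mul PA linearZ /= P_sym. Qed.

Lemma P_orth l m : l != m -> eigenproj A l *m eigenproj A m = 0.
Proof.
move=> lm.
have H : V l *m (V m)^T = 0.
  move: (VA l) (VA m); move: (V l) (V m) => W1 W2 h1 h2.
  have : (l - m) *: (W1 *m W2^T) = 0.
    rewrite scalerBl scalemxAl -h1 scalemxAr.
    have -> : m *: W2^T = (W2 *m A)^T by rewrite h2 linearZ.
    by rewrite trmx_mul sA mulmxA subrr.
  by move/eqP; rewrite scaler_eq0 subr_eq0 (negbTE lm) /= => /eqP.
rewrite !eigenprojE; move: (V l) (V m) H => W1 W2 H.
by rewrite !mulmxA -(mulmxA _ W1) H mulmx0 !mul0mx.
Qed.

Lemma P_fix l p (W : 'M[R]_(p, n)) : (W <= eigenspace A l)%MS -> W *m eigenproj A l = W.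
Proof.
rewrite -(eq_row_base (eigenspace A l)) -/(V l) => /submxP [X ->].
rewrite eigenprojE; have := G_unit l; rewrite /G; move: (V l) => W' GU.
by rewrite !mulmxA -(mulmxA X) -(mulmxA _ (W' *m W'^T)) mulmxV // mulmx1.
Qed.


Lemma mem_spec x : (x \in spectrum A) = eigenvalue A x.
Proof.
rewrite eigenvalue_root_char /spectrum.
have /roots_on_rootsR H := monic_neq0 (char_poly_monic A).
by rewrite -H in_itv.
Qed.

Lemma uniq_spec : uniq (spectrum A).
Proof. exact: uniq_roots. Qed.

Lemma sumP_r x : x \in spectrum A ->
  \sum_(l <- spectrum A) eigenproj A l *m eigenproj A x = eigenproj A x.
Proof.
move=> xs; rewrite (bigD1_seq x) //= ?uniq_spec // P_idem big1 ?addr0 // => l lx.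
exact: P_orth.
Qed.

Lemma P_sum : \sum_(l <- spectrum A) eigenproj A l = 1%:M.
Proof.
set S := \sum_(l <- spectrum A) eigenproj A l.
set Q := 1%:M - S.
suff : Q = 0 by move/eqP; rewrite subr_eq0 => /eqP <-.
have QP x : x \in spectrum A -> Q *m eigenproj A x = 0.
  by move=> xs; rewrite mulmxBl mul1mx /S mulmx_suml sumP_r // subrr.
have Ssym : S^T = S.
  by rewrite /S raddf_sum; apply: eq_bigr => l _; exact: P_sym.
have Qsym : Q^T = Q by rewrite /Q linearB /= trmx1 Ssym.
have SQ : S *m Q = 0.
  rewrite /S mulmx_suml big_seq big1 // => l ls.
  by rewrite -[eigenproj A l]P_sym -Qsym -trmx_mul QP // trmx0.
have QQ : Q *m Q = Q by rewrite {1}/Q mulmxBl mul1mx SQ subr0.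
have AQ : A *m Q = Q *m A.
  rewrite /Q mulmxBr mulmxBl mulmx1 mul1mx /S mulmx_sumr mulmx_suml; congr (_ - _).
  by apply: eq_bigr => l _; rewrite AP PA.
have sQA : (Q *m A <= Q)%MS by rewrite -{1}QQ -mulmxA -AQ mulmxA submxMl.
apply/eqP; apply/negPn/negP => Q0.
have [x [w [w0 wQ wA]]] := sym_eigvec sA Q0 sQA.
have wE : (w <= eigenspace A x)%MS by apply/eigenspaceP.
have xs : x \in spectrum A.
  rewrite mem_spec; apply: contra w0 => /eqP E0; by rewrite -submx0 -E0.
move/submxP: wQ => [X wX].
by move: w0; rewrite -(P_fix wE) wX -mulmxA QP // mulmx0 eqxx.
Qed.

End Proj.
End Cx.

End Aux_S1.
Import Aux_S1.

Module Aux_S2.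
Set Implicit Arguments. Unset Strict Implicit. Unset Printing Implicit Defensive.

Section Real.
Variable R : realType.

Lemma fin_lb (s : seq R) (P : pred R) (f : R -> R) :
  (forall l, l \in s -> P l -> 0 < f l) ->
  exists2 d : R, 0 < d & forall l, l \in s -> P l -> d <= f l.
Proof.
elim: s => [|a s IH] H; first by exists 1 => // l; rewrite in_nil.
have [d d0 Hd] := IH (fun l ls => H l (@mem_behead _ (a :: s) _ ls)).
case: (boolP (P a)) => Pa.
  exists (Num.min d (f a)); first by rewrite lt_min d0 H ?mem_head.
  move=> l; rewrite in_cons => /orP [/eqP -> _|ls Pl]; first by rewrite ge_min lexx orbT.
  by rewrite ge_min Hd.
exists d => // l; rewrite in_cons => /orP [/eqP ->|]; first by rewrite (negbTE Pa).
exact: Hd.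
Qed.

Lemma fin_ub (s : seq R) (f : R -> R) :
  exists2 M : R, 0 < M & forall l, l \in s -> f l <= M.
Proof.
elim: s => [|a s [M M0 HM]]; first by exists 1 => // l; rewrite in_nil.
exists (Num.max M (f a)); first by rewrite lt_max M0.
move=> l; rewrite in_cons => /orP [/eqP ->|ls]; first by rewrite le_max lexx orbT.
by rewrite le_max HM.
Qed.

Lemma term_id (w l x0 t e : R) : 1 - l * x0 != 0 -> 1 - l * (x0 + t * e) != 0 ->
  w / (1 - l * (x0 + t * e)) - w / (1 - l * x0) =
  t * e * (w * l / (1 - l * x0) ^+ 2) +
  (t * e) ^+ 2 * (w * l ^+ 2 / ((1 - l * x0) ^+ 2 * (1 - l * (x0 + t * e)))).
Proof. by move=> d0 d'0; field; rewrite d0 d'0. Qed.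

Lemma term_bd (w l d d' t e : R) : 0 <= w -> 0 < d -> d / 2 <= d' -> e ^+ 2 = 1 ->
  (t * e) ^+ 2 * (w * l ^+ 2 / (d ^+ 2 * d')) <= t ^+ 2 * (2 * w * l ^+ 2 / d ^+ 3).
Proof.
move=> w0 d0 dd e2.
have d'0 : 0 < d' by apply: lt_le_trans dd; rewrite divr_gt0.
rewrite exprMn e2 mulr1; apply: ler_wpM2l; first exact: sqr_ge0.
have -> : w * l ^+ 2 / (d ^+ 2 * d') = (w * l ^+ 2 / d ^+ 2) * d'^-1.
  by field; rewrite !gt_eqF.
have -> : 2 * w * l ^+ 2 / d ^+ 3 = (w * l ^+ 2 / d ^+ 2) * (d / 2)^-1.
  by field; rewrite gt_eqF.
apply: ler_wpM2l; first by apply: divr_ge0; [apply: mulr_ge0 => //; exact: sqr_ge0|exact: sqr_ge0].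
by rewrite lef_pV2 // posrE divr_gt0.
Qed.

Lemma deriv_step (s : seq R) (w : R -> R) (x0 e : R) :
  (forall l, l \in s -> 0 <= w l) ->
  (forall l, l \in s -> w l != 0 -> 0 < 1 - l * x0) ->
  e ^+ 2 = 1 ->
  e * (\sum_(l <- s) w l * l / (1 - l * x0) ^+ 2) < 0 ->
  exists2 h0 : R, 0 < h0 & forall t, 0 < t <= h0 ->
    (forall l, l \in s -> w l != 0 -> 0 < 1 - l * (x0 + t * e)) /\
    \sum_(l <- s) w l / (1 - l * (x0 + t * e)) < \sum_(l <- s) w l / (1 - l * x0).
Proof.
move=> w0 dpos e2 De.
set D := \sum_(l <- s) _ in De.
have [dl dl0 Hdl] := fin_lb dpos.
have [L L0 HL] := fin_ub s (fun l => `|l|).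
set K := \sum_(l <- s) 2 * w l * l ^+ 2 / (1 - l * x0) ^+ 3.
have e1 : `|e| = 1.
  by apply/eqP; rewrite -(@eqrXn2 _ 2) ?normr_ge0 // real_normK ?num_real // e2 expr1n.
set h1 := dl / (2 * L).
set h2 := - (e * D) / (2 * (`|K| + 1)).
have h10 : 0 < h1 by rewrite divr_gt0 // mulr_gt0.
have h20 : 0 < h2 by rewrite divr_gt0 ?oppr_gt0 // mulr_gt0 // ltr_pwDr // normr_ge0.
exists (Num.min h1 h2); first by rewrite lt_min h10 h20.
move=> t /andP [t0]; rewrite le_min => /andP [th1 th2].
have dd' l : l \in s -> w l != 0 -> (1 - l * x0) / 2 <= 1 - l * (x0 + t * e).
  move=> ls wl.
  have H1 : `|l * (t * e)| <= dl / 2.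
    rewrite !normrM e1 mulr1 (gtr0_norm t0).
    apply: le_trans (_ : L * h1 <= _).
      apply: ler_pM => //; [exact: ltW|exact: HL].
    by rewrite /h1 le_eqVlt; apply/orP; left; apply/eqP; field; rewrite gt_eqF.
  have H2 := Hdl l ls wl.
  have := ler_norm (l * (t * e)); rewrite mulrDr.
  move: H1 H2; set a := l * (t * e); set d := 1 - l * x0 => H1 H2 H3.
  have -> : 1 - (l * x0 + a) = d - a by rewrite /d opprD addrA.
  lra.
have pos l : l \in s -> w l != 0 -> 0 < 1 - l * (x0 + t * e).
  move=> ls wl; apply: lt_le_trans (dd' l ls wl); rewrite divr_gt0 //.
  exact: dpos.
split => //.
rewrite -subr_lt0 -sumrB.
have step : \sum_(l <- s) (w l / (1 - l * (x0 + t * e)) - w l / (1 - l * x0)) <=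
    t * e * D + t ^+ 2 * K.
  rewrite /D /K mulr_sumr mulr_sumr -big_split /= big_seq [X in _ <= X]big_seq.
  apply: ler_sum => l ls.
  have [wl0|wl] := eqVneq (w l) 0.
    by rewrite wl0 !(mul0r, mulr0, subr0, add0r, mul0r) oppr0.
  rewrite term_id ?gt_eqF ?pos ?dpos // lerD2l.
  apply: term_bd => //; [exact: w0|exact: dpos|exact: dd'].
apply: le_lt_trans step _.
have k0 : 0 <= `|K| by exact: normr_ge0.
set k := `|K| in h2 h20 k0 th2 *.
set Z := e * D in De h2 h20 th2 *.
have hk : h2 * k <= - Z / 2.
  have -> : h2 * k = - Z / 2 * (k / (k + 1)).
    by rewrite /h2; field; rewrite gt_eqF // ltr_pwDr.
  apply: ler_piMr; first by rewrite divr_ge0 // oppr_ge0 ltW.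
  by rewrite ler_pdivrMr ?mul1r ?ltr_pwDr // lerDl.
have tk : t * k <= - Z / 2.
  by apply: le_trans hk; apply: ler_wpM2r.
have tK : t ^+ 2 * K <= t * (t * k).
  by rewrite expr2 -mulrA !ler_pM2l // /k ler_norm.
have : t * (t * k) <= t * (- Z / 2) by rewrite ler_pM2l.
rewrite -(mulrA t e D) -/Z.
move: tK; set P := t ^+ 2 * K; set Q := t * (t * k); move=> tK tQ.
have tZ : t * Z < 0 by rewrite pmulr_rlt0.
have E : t * (- Z / 2) = - (t * Z) / 2 by rewrite mulrA mulrN. rewrite E in tQ.
lra.
Qed.

End Real.

End Aux_S2.
Import Aux_S2.

Module Aux_S3.
Set Implicit Arguments. Unset Strict Implicit. Unset Printing Implicit Defensive.

Section Main.
Variables (R : realType) (n : nat) (A : 'M[R]_n).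
Hypothesis sA : A^T = A.

Local Notation s := (spectrum A).
Local Notation w := (eigweight A).
Local Notation one := (ones R n).
Let q l := eigenproj A l *m one.

Lemma sqnormE (u : 'cV[R]_n) : sqnorm u = dotp u u.
Proof. by rewrite /sqnorm /dotp mxE; apply: eq_bigr => i _; rewrite mxE expr2. Qed.

Lemma dotpC (u v : 'cV[R]_n) : dotp u v = dotp v u.
Proof.
by rewrite /dotp -[v^T *m u]trmxK trmx_mul trmxK [in RHS]mxE.
Qed.

Lemma dotpDr (u v1 v2 : 'cV[R]_n) : dotp u (v1 + v2) = dotp u v1 + dotp u v2.
Proof. by rewrite /dotp mulmxDr mxE. Qed.

Lemma dotpZr (u v : 'cV[R]_n) k : dotp u (k *: v) = k * dotp u v.
Proof. by rewrite /dotp -scalemxAr mxE. Qed.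

Lemma dotp_sumr (I : Type) (r : seq I) (u : 'cV[R]_n) (F : I -> 'cV[R]_n) :
  dotp u (\sum_(i <- r) F i) = \sum_(i <- r) dotp u (F i).
Proof.
elim: r => [|a r IH]; first by rewrite !big_nil /dotp mulmx0 mxE.
by rewrite !big_cons dotpDr IH.
Qed.

Lemma dotp_suml (I : Type) (r : seq I) (u : 'cV[R]_n) (F : I -> 'cV[R]_n) :
  dotp (\sum_(i <- r) F i) u = \sum_(i <- r) dotp (F i) u.
Proof. by rewrite dotpC dotp_sumr; apply: eq_bigr => i _; rewrite dotpC. Qed.

Lemma dotpZl (u v : 'cV[R]_n) k : dotp (k *: u) v = k * dotp u v.
Proof. by rewrite dotpC dotpZr dotpC. Qed.

Lemma dotp_ge0 (u : 'cV[R]_n) : 0 <= dotp u u.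
Proof. by rewrite -sqnormE /sqnorm; apply: sumr_ge0 => i _; exact: sqr_ge0. Qed.

Lemma dotp0 (u : 'cV[R]_n) : dotp u u = 0 -> u = 0.
Proof.
rewrite -sqnormE /sqnorm => /eqP; rewrite psumr_eq0 => [/allP H|i _]; last exact: sqr_ge0.
apply/matrixP => i j; rewrite ord1 mxE; apply/eqP; rewrite -sqrf_eq0.
by apply: H; rewrite mem_index_enum.
Qed.

Let qv (v : 'cV[R]_n) l := eigenproj A l *m v.

Lemma dotp_qv v l m : dotp (qv v l) (qv v m) = if l == m then dotp v (qv v l) else 0.
Proof.
rewrite /dotp /qv trmx_mul P_sym // mulmxA -(mulmxA _ (eigenproj A l)).
case: eqP => [<-|/eqP lm]; first by rewrite P_idem // mulmxA.
by rewrite P_orth // mulmx0 mul0mx mxE.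
Qed.

Lemma dotp_q l m : dotp (q l) (q m) = if l == m then w l else 0.
Proof. by rewrite /q -/(qv one l) -/(qv one m) dotp_qv /qv /dotp mulmxA. Qed.

Lemma w_q l : w l = dotp (q l) (q l).
Proof. by rewrite dotp_q eqxx. Qed.

Lemma w_ge0 l : 0 <= w l.
Proof. by rewrite w_q dotp_ge0. Qed.

Lemma q_eq0 l : w l = 0 -> q l = 0.
Proof. by rewrite w_q => /dotp0. Qed.

Lemma Aqv v l : A *m qv v l = l *: qv v l.
Proof. by rewrite /qv mulmxA AP // scalemxAl. Qed.

Lemma Aq l : A *m q l = l *: q l.
Proof. exact: Aqv. Qed.

Lemma qv_sum v : v = \sum_(l <- s) qv v l.
Proof. by rewrite /qv -mulmx_suml P_sum // mul1mx. Qed.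

Lemma ones_sum : one = \sum_(l <- s) q l.
Proof. exact: qv_sum. Qed.

Lemma dotp_comb_v v (a b : R -> R) :
  dotp (\sum_(l <- s) a l *: qv v l) (\sum_(l <- s) b l *: qv v l) =
  \sum_(l <- s) a l * b l * dotp v (qv v l).
Proof.
rewrite dotp_suml big_seq [RHS]big_seq; apply: eq_bigr => l ls.
rewrite dotpZl dotp_sumr (bigD1_seq l) ?uniq_spec //= big1 ?addr0.
  by rewrite dotpZr dotp_qv eqxx mulrA.
by move=> m ml; rewrite dotpZr dotp_qv eq_sym (negbTE ml) mulr0.
Qed.

Lemma dotp_comb (a b : R -> R) :
  dotp (\sum_(l <- s) a l *: q l) (\sum_(l <- s) b l *: q l) = \sum_(l <- s) a l * b l * w l.
Proof.
rewrite [LHS](dotp_comb_v one a b); apply: eq_bigr => l _.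
by rewrite /qv /dotp mulmxA.
Qed.

Lemma quad_form v : dotp v (A *m v) = \sum_(l <- s) l * dotp (qv v l) (qv v l).
Proof.
have Av : A *m v = \sum_(l <- s) l *: qv v l.
  by rewrite {1}(qv_sum v) mulmx_sumr; apply: eq_bigr => l _; rewrite Aqv.
have E : v = \sum_(l <- s) 1 *: qv v l.
  by rewrite {1}(qv_sum v); apply: eq_bigr => l _; rewrite scale1r.
rewrite Av {1}E dotp_comb_v; apply: eq_bigr => l _.
by rewrite mul1r dotp_qv eqxx.
Qed.

Lemma dotpDl (u1 u2 v : 'cV[R]_n) : dotp (u1 + u2) v = dotp u1 v + dotp u2 v.
Proof. by rewrite dotpC dotpDr !(dotpC v). Qed.

Lemma dotp_delta i j : dotp (delta_mx i 0) (A *m delta_mx j 0) = A i j.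
Proof. by rewrite /dotp trmx_delta mulmxA -rowE -colE !mxE. Qed.

Lemma sign_zero (k : R) : (forall i, A i i = 0) -> k != 0 ->
  (forall v, k * dotp v (A *m v) <= 0) -> A = 0.
Proof.
move=> diag k0 H; apply/matrixP => i j; rewrite mxE.
have [<-|ij] := eqVneq i j; first exact: diag.
have Aji : A j i = A i j by rewrite -[in LHS]sA mxE.
have ex (sg : R) : k * dotp (delta_mx i 0 + sg *: delta_mx j 0)
    (A *m (delta_mx i 0 + sg *: delta_mx j 0)) = k * (2 * sg * A i j).
  rewrite mulmxDr -scalemxAr !dotpDl !dotpDr !dotpZl !dotpZr !dotp_delta !diag Aji.
  congr (_ * _); ring.
have h1 := H (delta_mx i 0 + 1 *: delta_mx j 0).
have h2 := H (delta_mx i 0 + (-1) *: delta_mx j 0).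
rewrite ex in h1; rewrite ex in h2.
have : k * A i j = 0.
  move: h1 h2; set X := A i j => h1 h2.
  have e1 : k * (2 * 1 * X) = 2 * (k * X) by ring.
  have e2 : k * (2 * -1 * X) = - (2 * (k * X)) by ring.
  rewrite e1 in h1; rewrite e2 in h2; lra.
by move/eqP; rewrite mulf_eq0 (negbTE k0) => /eqP.
Qed.

Lemma exists_pos : (forall i, A i i = 0) -> A != 0 -> exists2 l, l \in s & 0 < l.
Proof.
move=> diag A0; have [/hasP [l ls lp]|/hasPn H] := boolP (has (fun l => 0 < l) s).
  by exists l.
case/eqP: A0; apply: (@sign_zero 1 diag (oner_neq0 _)) => v.
rewrite mul1r quad_form big_seq; apply: sumr_le0 => l ls.
by rewrite mulr_le0_ge0 ?dotp_ge0 // leNgt; apply: H.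
Qed.

Lemma exists_neg : (forall i, A i i = 0) -> A != 0 -> exists2 l, l \in s & l < 0.
Proof.
move=> diag A0; have [/hasP [l ls lp]|/hasPn H] := boolP (has (fun l => l < 0) s).
  by exists l.
case/eqP: A0; apply: (@sign_zero (-1) diag); first by rewrite oppr_eq0 oner_neq0.
move=> v; rewrite mulN1r oppr_le0 quad_form big_seq; apply: sumr_ge0 => l ls.
by rewrite mulr_ge0 ?dotp_ge0 // leNgt; apply: H.
Qed.

Lemma dotpA (u v : 'cV[R]_n) : dotp u (A *m v) = dotp (A *m u) v.
Proof. by rewrite /dotp trmx_mul sA mulmxA. Qed.

Lemma dotp0l (v : 'cV[R]_n) : dotp 0 v = 0.
Proof. by rewrite /dotp trmx0 mul0mx mxE. Qed.

Lemma WA_fin x : (forall l, l \in s -> w l != 0 -> 1 - l * x != 0) ->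
  WA A x = (\sum_(l <- s) w l / (1 - l * x))%:E.
Proof.
move=> H; rewrite /WA /=.
have -> : has (fun l => 1 - l * x == 0) [seq l <- s | w l != 0] = false.
  apply/negbTE/hasPn => l; rewrite mem_filter => /andP [wl ls]; exact: H.
congr (_%:E); rewrite big_filter big_mkcond; apply: eq_bigr => l _.
by case: ifP => // /negbT; rewrite negbK => /eqP ->; rewrite mul0r.
Qed.

Lemma WA_pole x : WA A x != +oo%E -> forall l, l \in s -> w l != 0 -> 1 - l * x != 0.
Proof.
move=> H l ls wl; apply: contra H => /eqP d0; rewrite /WA /=.
have -> : has (fun l => 1 - l * x == 0) [seq l <- s | w l != 0] = true.
  by apply/hasP; exists l; rewrite ?mem_filter ?wl ?ls ?d0.
by [].
Qed.

Section U0.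
Variable x0 : R.
Hypothesis hp : forall l, l \in s -> w l != 0 -> 1 - l * x0 != 0.
Let c l := (1 - l * x0)^-1.
Let u0 := \sum_(l <- s) c l *: q l.
Let D := \sum_(l <- s) w l * l / (1 - l * x0) ^+ 2.
Let F := \sum_(l <- s) w l / (1 - l * x0).

Lemma one_u0 : dotp one u0 = F.
Proof.
have -> : one = \sum_(l <- s) 1 *: q l.
  by rewrite ones_sum; apply: eq_bigr => l _; rewrite scale1r.
by rewrite dotp_comb; apply: eq_bigr => l _; rewrite mul1r mulrC.
Qed.

Lemma u0u0 : dotp u0 u0 = F + x0 * D.
Proof.
rewrite dotp_comb /F /D mulr_sumr -big_split /= big_seq [RHS]big_seq.
apply: eq_bigr => l ls; rewrite /c.
have [->|wl] := eqVneq (w l) 0; first by rewrite !(mulr0, mul0r, addr0).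
by field; rewrite hp.
Qed.

Lemma Au0 : A *m u0 = \sum_(l <- s) (c l * l) *: q l.
Proof.
by rewrite /u0 mulmx_sumr; apply: eq_bigr => l _; rewrite -scalemxAr Aq scalerA.
Qed.

Lemma u0Au0 : dotp u0 (A *m u0) = D.
Proof.
rewrite Au0 dotp_comb /D big_seq [RHS]big_seq.
apply: eq_bigr => l ls; rewrite /c.
have [->|wl] := eqVneq (w l) 0; first by rewrite !(mulr0, mul0r).
by field; rewrite hp.
Qed.

Lemma interior : D = 0 -> exists u : 'cV[R]_n,
  [/\ sqnorm u = F, dotp u (A *m u) = 0 & sqnorm u = dotp one u].
Proof.
move=> D0; exists u0; rewrite sqnormE u0u0 u0Au0 one_u0 D0 mulr0 addr0; by split.
Qed.

Lemma endpoint mu : mu \in s -> mu * x0 = 1 -> w mu = 0 -> mu * D < 0 ->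
  exists u : 'cV[R]_n,
  [/\ sqnorm u = F, dotp u (A *m u) = 0 & sqnorm u = dotp one u].
Proof.
move=> mus mux wmu muD.
have mu0 : mu != 0 by apply/eqP => m0; move: mux; rewrite m0 mul0r => /esym/eqP; rewrite oner_eq0.
have /eigenvalueP [rr hr rr0] : eigenvalue A mu by rewrite -mem_spec.
have rE : (rr <= eigenspace A mu)%MS by apply/eigenspaceP.
set v := rr^T.
have Av : A *m v = mu *: v by rewrite /v -{1}sA -trmx_mul hr linearZ.
have qv0 l : l \in s -> dotp (q l) v = 0.
  move=> ls; have [->|lmu] := eqVneq l mu; first by rewrite q_eq0 // dotp0l.
  have rP : rr *m eigenproj A l = 0.
    by rewrite -(P_fix rE) -mulmxA P_orth ?mulmx0 // eq_sym.
  by rewrite dotpC /dotp /v trmxK /q mulmxA rP mul0mx mxE.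
have one_v : dotp one v = 0.
  by rewrite ones_sum dotp_suml big_seq big1 // => l ls; apply: qv0.
have u0_v : dotp u0 v = 0.
  by rewrite /u0 dotp_suml big_seq big1 // => l ls; rewrite dotpZl qv0 ?mulr0.
have vv0 : 0 < dotp v v.
  rewrite lt_neqAle dotp_ge0 andbT eq_sym; apply: contra rr0 => /eqP /dotp0 v0.
  by rewrite -trmx_eq0 -/v v0.
set vv := dotp v v in vv0.
have T0 : 0 <= - D / (mu * vv).
  have -> : - D / (mu * vv) = (- (mu * D)) / (mu ^+ 2 * vv) by field; rewrite mu0 gt_eqF.
  apply: divr_ge0; first by rewrite oppr_ge0 ltW.
  by apply: mulr_ge0; [exact: sqr_ge0|exact: ltW].
set t := Num.sqrt (- D / (mu * vv)).
have t2 : t ^+ 2 = - D / (mu * vv) by rewrite sqr_sqrtr.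
exists (u0 + t *: v).
rewrite sqnormE !dotpDl !dotpDr !dotpZl !dotpZr (dotpC v u0) u0_v one_v.
rewrite mulmxDr -scalemxAr Av !dotpDr !dotpZr (dotpA v) Av dotpZl (dotpC v u0) u0_v.
rewrite -/vv u0u0 u0Au0 one_u0 !(mulr0, addr0, add0r).
have x0E : x0 = mu^-1 by apply: (mulfI mu0); rewrite mux mulfV.
split.
- rewrite mulrA -expr2 t2 x0E; field; rewrite mu0 gt_eqF //.
- rewrite mulrA -expr2 (mulrC mu) mulrA t2; field; rewrite mu0 gt_eqF //.
- rewrite mulrA -expr2 t2 x0E; field; rewrite mu0 gt_eqF //.
Qed.

End U0.

End Main.

End Aux_S3.
Import Aux_S3.

Unset Implicit Arguments. Set Strict Implicit. Set Printing Implicit Defensive.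

Lemma head_le (R : realType) (r : seq R) l : sorted <%R r -> l \in r -> head 0 r <= l.
Proof.
case: r => [//|a r] /= /(order_path_min lt_trans) /allP H.
by rewrite in_cons => /orP [/eqP ->//|/H /ltW].
Qed.

Lemma le_last (R : realType) (r : seq R) l : sorted <%R r -> l \in r -> l <= last 0 r.
Proof.
case: r => [//|a r] /=; elim: r a l => [|b r IH] a l /=.
  by move=> _; rewrite inE => /eqP ->.
move=> /andP [ab pb]; rewrite in_cons => /orP [/eqP ->|lr].
  by apply: (le_trans (ltW ab)); apply: (IH b b pb); rewrite mem_head.
exact: IH.
Qed.

Lemma range_pos (R : realType) (L M l x : R) : L < 0 -> 0 < M -> L <= l -> l <= M ->
  L^-1 <= x -> x <= M^-1 -> 0 <= 1 - l * x.
Proof.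
move=> L0 M0 Ll lM ax xb.
have LL : L * L^-1 = 1 by rewrite divff // lt_eqF.
have MM : M * M^-1 = 1 by rewrite divff // gt_eqF.
move: ax xb LL MM; set Li := L^-1; set Mi := M^-1 => ax xb LL MM.
have [l0|l0] := leP 0 l; have [x0|x0] := leP 0 x.
- have p1 : 0 <= (M - l) * x by rewrite mulr_ge0 // subr_ge0.
  have p2 : 0 <= M * (Mi - x) by rewrite mulr_ge0 ?subr_ge0 // ltW.
  nra.
- have : l * x <= 0 by rewrite mulr_ge0_le0 // ltW.
  lra.
- have : l * x <= 0 by rewrite mulr_le0_ge0 // ltW.
  lra.
- have p1 : (l - L) * x <= 0 by rewrite mulr_ge0_le0 ?subr_ge0 // ltW.
  have p2 : L * (x - Li) <= 0 by rewrite mulr_le0_ge0 ?subr_ge0 // ltW.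
  nra.
Qed.

Theorem proposition7 (R : realType) (n : nat) (e : rel 'I_n) (A : 'M[R]_n) (y : R) :
  simple_graph e -> weighted_adjacency e A -> A != 0 ->
  (exists2 x0 : R, (lambda_min A)^-1 <= x0 <= (lambda_max A)^-1 & WA A x0 = WA A y) ->
  (forall x : R, (lambda_min A)^-1 <= x <= (lambda_max A)^-1 -> (WA A y <= WA A x)%E) ->
  exists u : 'cV[R]_n,
    [/\ (sqnorm u)%:E = WA A y, dotp u (A *m u) = 0 & sqnorm u = dotp (ones R n) u].
Proof.
move=> _ [sA [diag _]] A0 [x0 hx0 Wx0] Wmin.
have ss : sorted <%R (spectrum A) by exact: sorted_roots.
have [lp lps lp0] := exists_pos sA diag A0.
have [ln lns ln0] := exists_neg sA diag A0.
have Ll l : l \in spectrum A -> lambda_min A <= l by exact: head_le.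
have lM l : l \in spectrum A -> l <= lambda_max A by exact: le_last.
set L := lambda_min A in Ll hx0 Wmin *; set M := lambda_max A in lM hx0 Wmin *.
have L0 : L < 0 by apply: le_lt_trans (Ll _ lns) ln0.
have M0 : 0 < M by apply: lt_le_trans lp0 (lM _ lps).
have a0 : L^-1 < 0 by rewrite invr_lt0.
have b0 : 0 < M^-1 by rewrite invr_gt0.
have rng x l : L^-1 <= x <= M^-1 -> l \in spectrum A -> 0 <= 1 - l * x.
  by move=> /andP [ax xb] ls; exact: (@range_pos _ L M l x L0 M0 (Ll l ls) (lM l ls) ax xb).
have Wle x : L^-1 <= x <= M^-1 -> (WA A x0 <= WA A x)%E.
  by move=> hx; rewrite Wx0; exact: Wmin.
have fin0 : WA A x0 != +oo%E.
  have h0 : L^-1 <= 0 <= M^-1 by rewrite !ltW.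
  have := Wle 0 h0; rewrite (@WA_fin _ _ _ 0) => [|l _ _]; last first.
    by rewrite mulr0 subr0 oner_neq0.
  by apply: contraTneq => ->; rewrite leye_eq.
have hp := WA_pole fin0.
have dpos l : l \in spectrum A -> eigweight A l != 0 -> 0 < 1 - l * x0.
  by move=> ls wl; rewrite lt_neqAle eq_sym hp //= rng.
have Weq : WA A y = (\sum_(l <- spectrum A) eigweight A l / (1 - l * x0))%:E.
  by rewrite -Wx0 WA_fin.
suff [u [h1 h2 h3]] : exists u : 'cV_n,
  [/\ sqnorm u = \sum_(l <- spectrum A) eigweight A l / (1 - l * x0),
      dotp u (A *m u) = 0 & sqnorm u = dotp (ones R n) u].
  by exists u; split => //; rewrite Weq h1.
set D := \sum_(l <- spectrum A) eigweight A l * l / (1 - l * x0) ^+ 2.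
have nomove (ee t : R) : L^-1 <= x0 + t * ee <= M^-1 ->
   (forall l, l \in spectrum A -> eigweight A l != 0 -> 0 < 1 - l * (x0 + t * ee)) ->
   \sum_(l <- spectrum A) eigweight A l / (1 - l * (x0 + t * ee)) <
   \sum_(l <- spectrum A) eigweight A l / (1 - l * x0) -> False.
  move=> hx pos lt; have := Wle _ hx.
  rewrite (WA_fin hp) WA_fin ?lee_fin; first by rewrite leNgt lt.
  by move=> l ls wl; rewrite gt_eqF // pos.
have [Dn|Dp|D0] := ltgtP D 0.
- have x0b : x0 = M^-1.
    apply/eqP; rewrite eq_le; case/andP: (hx0) => _ -> /=.
    rewrite leNgt; apply/negP => xb.
    have Dn' : 1 * D < 0 by rewrite mul1r.
    have [h0 h00 H] := @deriv_step _ (spectrum A) (eigweight A) x0 1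
      (fun l _ => w_ge0 sA l) dpos (expr1n _ _) Dn'.
    set t := Num.min h0 (M^-1 - x0).
    have t0 : 0 < t by rewrite lt_min h00 subr_gt0.
    have tt : 0 < t <= h0 by rewrite t0 ge_min lexx.
    have [pos lt] := H t tt.
    apply: (nomove 1 t) => //; rewrite mulr1; apply/andP; split.
      by case/andP: hx0 => ax _; apply: le_trans ax _; rewrite lerDl ltW.
    by rewrite -lerBrDl /t ge_min lexx orbT.
  have Ms : M \in spectrum A.
    have := mem_last 0 (spectrum A); rewrite in_cons => /orP [/eqP M00|//].
    by move: M0; rewrite /M /lambda_max M00 ltxx.
  apply: (endpoint sA hp Ms).
  + by rewrite x0b mulfV // gt_eqF.
  + apply/eqP; apply: contraT => wM; have := hp M Ms wM.
    by rewrite x0b mulfV ?(gt_eqF M0) // subrr eqxx.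
  + by rewrite pmulr_rlt0.
- have x0a : x0 = L^-1.
    apply/eqP; rewrite eq_le; case/andP: (hx0) => -> _ /=; rewrite andbT.
    rewrite leNgt; apply/negP => ax.
    have e2 : (-1 : R) ^+ 2 = 1 by rewrite sqrrN expr1n.
    have Dp' : -1 * D < 0 by rewrite mulN1r oppr_lt0.
    have [h0 h00 H] := @deriv_step _ (spectrum A) (eigweight A) x0 (-1)
      (fun l _ => w_ge0 sA l) dpos e2 Dp'.
    set t := Num.min h0 (x0 - L^-1).
    have t0 : 0 < t by rewrite lt_min h00 subr_gt0.
    have tt : 0 < t <= h0 by rewrite t0 ge_min lexx.
    have [pos lt] := H t tt.
    apply: (nomove (-1) t) => //; rewrite mulrN1; apply/andP; split.
      by rewrite lerBrDl -lerBrDr /t ge_min lexx orbT.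
    by case/andP: hx0 => _ xb; apply: le_trans xb; rewrite gerDl oppr_le0 ltW.
  have Ls : L \in spectrum A.
    by move: lns; rewrite /L /lambda_min; case: (spectrum A) => //= a r _; rewrite mem_head.
  apply: (endpoint sA hp Ls).
  + by rewrite x0a mulfV // lt_eqF.
  + apply/eqP; apply: contraT => wL; have := hp L Ls wL.
    by rewrite x0a mulfV ?(lt_eqF L0) // subrr eqxx.
  + by rewrite nmulr_rlt0.
- exact: (interior sA hp D0).
Qed.
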